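(* Let $m\ge 2$ be an integer and let $f(1,1,m)$ be the minimum number of sets in an antipodal $(1,m)$-fold cover of the circle $S^1$ with open sets. Then $f(1,1,m)=2+m$.
   Context: $S^1$ denotes the unit circle in $\mathbb{R}^{2}$ centered at the origin. A cover of $S^1$ is a (finite) family of subsets of $S^1$; it is an $n$-fold cover if every point belongs to at least $n$ of the sets. A cover is antipodal if none of its sets contains a pair of antipodal points $x,-x$. The open northern hemisphere is $\{x\in S^1: x_{2}>0\}$. For $m>n\ge 1$, an $(n,m)$-fold cover is an $n$-fold cover in which every point of the open northern hemisphere belongs to at least $m$ of the sets. *)

(* Defs.v *)
From Stdlib Require Import Reals List.
Open Scope R_scope.

Definition point := (R * R)%type.

Definition S1 (p : point) : Prop := fst p ^ 2 + snd p ^ 2 = 1.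

Definition antipode (p : point) : point := (- fst p, - snd p).

Definition dist2 (p q : point) : R :=
  sqrt ((fst p - fst q) ^ 2 + (snd p - snd q) ^ 2).

Definition open_in_S1 (A : point -> Prop) : Prop :=
  forall p, A p -> exists eps, 0 < eps /\
    forall q, S1 q -> dist2 p q < eps -> A q.

(* A set_family of k sets is indexed by i < k. *)
Definition set_family := nat -> point -> Prop.

Definition family_of_subsets (k : nat) (A : set_family) : Prop :=
  forall i p, (i < k)%nat -> A i p -> S1 p.

Definition in_at_least (n k : nat) (A : set_family) (p : point) : Prop :=
  exists l : list nat, NoDup l /\ length l = n /\
    forall i, In i l -> (i < k)%nat /\ A i p.

Definition nfold_cover (n k : nat) (A : set_family) : Prop :=
  family_of_subsets k A /\ forall p, S1 p -> in_at_least n k A p.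

Definition antipodal (k : nat) (A : set_family) : Prop :=
  forall i p, (i < k)%nat -> A i p -> ~ A i (antipode p).

Definition north (p : point) : Prop := S1 p /\ 0 < snd p.

Definition nm_fold_cover (n m k : nat) (A : set_family) : Prop :=
  nfold_cover n k A /\ forall p, north p -> in_at_least m k A p.

Definition antipodal_open_nm_cover (n m k : nat) (A : set_family) : Prop :=
  nm_fold_cover n m k A /\ antipodal k A /\ forall i, (i < k)%nat -> open_in_S1 (A i).

(* Main.v *)
Require Import Defs.
From Stdlib Require Import Reals List Lra Lia Psatz Classical.
Open Scope R_scope.

Lemma count_le (l : list nat) (k : nat) :
  NoDup l -> (forall i, In i l -> (i < k)%nat) -> (length l <= k)%nat.
Proof.
  intros ND H. rewrite <- (length_seq k 0). apply NoDup_incl_length; auto.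
  intros i Hi. apply in_seq. specialize (H i Hi). lia.
Qed.

Lemma one_set k A p : in_at_least 1 k A p -> exists i, (i < k)%nat /\ A i p.
Proof.
  intros [l [_ [len H]]]. destruct l as [|i l]; simpl in len; try discriminate.
  exists i. apply H. left; auto.
Qed.

Lemma antipode_inv p : antipode (antipode p) = p.
Proof. destruct p; unfold antipode; cbn; rewrite !Ropp_involutive; auto. Qed.

Lemma S1_antipode p : S1 p -> S1 (antipode p).
Proof. destruct p; unfold S1, antipode; cbn; intros; nra. Qed.

Lemma dist2_antipode a b : dist2 (antipode a) (antipode b) = dist2 a b.
Proof. destruct a, b; unfold dist2, antipode; cbn [fst snd]. f_equal. ring. Qed.

Lemma abs_le_dist_x p q : Rabs (fst p - fst q) <= dist2 p q.
Proof.
  unfold dist2. rewrite <- (sqrt_pow2 (Rabs (fst p - fst q))) by apply Rabs_pos.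
  apply sqrt_le_1_alt. rewrite pow2_abs. pose proof (pow2_ge_0 (snd p - snd q)). lra.
Qed.

Lemma abs_le_dist_y p q : Rabs (snd p - snd q) <= dist2 p q.
Proof.
  unfold dist2. rewrite <- (sqrt_pow2 (Rabs (snd p - snd q))) by apply Rabs_pos.
  apply sqrt_le_1_alt. rewrite pow2_abs. pose proof (pow2_ge_0 (fst p - fst q)). lra.
Qed.

Definition pt (t : R) : point := ((1 - t^2)/(1+t^2), 2*t/(1+t^2)).

Lemma pos1 t : 0 < 1 + t^2.
Proof. pose proof (pow2_ge_0 t). lra. Qed.

Lemma pt_S1 t : S1 (pt t).
Proof. unfold S1, pt; cbn [fst snd]. pose proof (pos1 t). field. lra. Qed.

Lemma pt_north t : 0 < t -> north (pt t).
Proof.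
  intros. split. apply pt_S1. unfold pt; cbn [fst snd]. pose proof (pos1 t).
  apply Rdiv_lt_0_compat; lra.
Qed.

Lemma pt_dist t u : dist2 (pt t) (pt u) <= 2 * Rabs (t - u).
Proof.
  unfold dist2, pt; cbn [fst snd].
  pose proof (pos1 t) as Ht. pose proof (pos1 u) as Hu.
  set (S := ((1 - t ^ 2) / (1 + t ^ 2) - (1 - u ^ 2) / (1 + u ^ 2)) ^ 2 +
     (2 * t / (1 + t ^ 2) - 2 * u / (1 + u ^ 2)) ^ 2).
  assert (HS : S * ((1 + t^2) * (1 + u^2)) = 4 * (t-u)^2).
  { unfold S. field. lra. }
  assert (S0 : 0 <= S).
  { unfold S. pose proof (pow2_ge_0 ((1 - t ^ 2) / (1 + t ^ 2) - (1 - u ^ 2) / (1 + u ^ 2))).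
    pose proof (pow2_ge_0 (2 * t / (1 + t ^ 2) - 2 * u / (1 + u ^ 2))). lra. }
  rewrite <- (sqrt_pow2 (2 * Rabs (t - u))) by (pose proof (Rabs_pos (t-u)); lra).
  apply sqrt_le_1_alt. fold S.
  assert (E : (2 * Rabs (t - u))^2 = 4 * (Rabs (t-u))^2) by ring. rewrite E.
  rewrite pow2_abs.
  pose proof (pow2_ge_0 t). pose proof (pow2_ge_0 u).
  assert (1 <= (1 + t^2) * (1 + u^2)) by nra.
  assert (S * 1 <= S * ((1 + t^2) * (1 + u^2))) by (apply Rmult_le_compat_l; lra). lra.
Qed.

Lemma pt_inv t : t <> 0 -> antipode (pt (/ t)) = pt (- t).
Proof.
  intros Ht. unfold antipode, pt; cbn [fst snd]. pose proof (pos1 t).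
  assert (t^2 <> 0) by (apply pow_nonzero; auto).
  pose proof (pos1 (/ t)). pose proof (pos1 (- t)).
  f_equal; field; repeat split; auto; try lra.
Qed.
Definition locP (Q : R -> Prop) : Prop :=
  forall t, 0 < t -> Q t -> exists d, 0 < d /\ forall u, 0 < u -> Rabs (u - t) < d -> Q u.

Lemma abs_lt_iff x d : -d < x < d -> Rabs x < d.
Proof. intros. unfold Rabs; destruct Rcase_abs; lra. Qed.

Lemma up (Q : R -> Prop) : locP Q -> locP (fun t => ~ Q t) ->
  forall a b, 0 < a -> a <= b -> Q a -> Q b.
Proof.
  intros H1 H2 a b Ha Hab Qa.
  destruct (classic (Q b)) as [|Hnb]; auto. exfalso.
  set (E := fun s => a <= s <= b /\ forall u, a <= u <= s -> Q u).
  assert (Hb : bound E) by (exists b; intros s [[_ ?] _]; auto).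
  assert (Ea : E a).
  { split; [lra|]. intros u ?. replace u with a by lra. auto. }
  destruct (completeness E Hb (ex_intro _ a Ea)) as [s [Hub Hlub]].
  assert (sa : a <= s) by (apply Hub; auto).
  assert (sb : s <= b) by (apply Hlub; intros x [[_ ?] _]; auto).
  assert (below : forall u, a <= u < s -> Q u).
  { intros u Hu. destruct (classic (exists s', E s' /\ u <= s')) as [[s' [[? Hq] ?]]|Hn].
    - apply Hq; lra.
    - exfalso. assert (s <= u).
      { apply Hlub. intros x Ex. destruct (Rle_dec x u); auto.
        exfalso; apply Hn; exists x; split; auto; lra. }
      lra. }
  destruct (classic (Q s)) as [Qs|nQs].
  - destruct (H1 s ltac:(lra) Qs) as [d [dpos Hd]].
    assert (Em : E (Rmin b (s + d/2))).
    { split.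
      - unfold Rmin; destruct Rle_dec; lra.
      - intros u Hu. destruct (Rlt_dec u s).
        + apply below; lra.
        + apply Hd; [lra|]. apply abs_lt_iff. unfold Rmin in Hu; destruct Rle_dec in Hu; lra. }
    pose proof (Hub _ Em). unfold Rmin in H; destruct Rle_dec in H.
    + replace b with s in Hnb by lra. auto.
    + lra.
  - destruct (H2 s ltac:(lra) nQs) as [d [dpos Hd]].
    assert (sa' : a < s) by (destruct (Req_dec a s); [subst; contradiction|lra]).
    set (u := Rmax a (s - d/2)).
    assert (Hu : a <= u < s /\ s - d/2 <= u) by (unfold u, Rmax; destruct Rle_dec; lra).
    apply (Hd u); [lra| |apply below; lra].
    apply abs_lt_iff. lra.
Qed.

Lemma connected_pos (P : R -> Prop) : locP P -> locP (fun t => ~ P t) ->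
  P 1 -> forall t, 0 < t -> P t.
Proof.
  intros H1 H2 P1 t Ht.
  destruct (Rle_dec 1 t).
  - apply (up P H1 H2 1 t); auto; lra.
  - apply NNPP. intro nPt.
    assert (H1' : locP (fun t => ~ ~ P t)).
    { intros x Hx Hnn. apply NNPP in Hnn. destruct (H1 x Hx Hnn) as [d [? Hd]].
      exists d; split; [auto|]. intros u Hu1 Hu2 Hnu. apply Hnu; auto. }
    apply (up (fun t => ~ P t) H2 H1' t 1 Ht ltac:(lra) nPt P1).
Qed.
Definition vx (m i : nat) : R := if Nat.ltb i m then 0 else if Nat.eqb i m then 1 else -1.
Definition vy (m i : nat) : R := if Nat.ltb i m then 1 else -1.
Definition Acon (m : nat) : set_family := fun i p => S1 p /\ 0 < vx m i * fst p + vy m i * snd p.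

Lemma vbounds m i : -1 <= vx m i <= 1 /\ -1 <= vy m i <= 1.
Proof. unfold vx, vy. destruct Nat.ltb; [|destruct Nat.eqb]; lra. Qed.

Lemma v_lt m i : (i < m)%nat -> vx m i = 0 /\ vy m i = 1.
Proof. intros. unfold vx, vy. replace (Nat.ltb i m) with true; [lra|]. symmetry; apply Nat.ltb_lt; auto. Qed.

Lemma v_m m : vx m m = 1 /\ vy m m = -1.
Proof. unfold vx, vy. rewrite Nat.ltb_irrefl, Nat.eqb_refl. lra. Qed.

Lemma v_m1 m : vx m (m+1) = -1 /\ vy m (m+1) = -1.
Proof.
  unfold vx, vy. replace (Nat.ltb (m+1) m) with false by (symmetry; apply Nat.ltb_ge; lia).
  replace (Nat.eqb (m+1) m) with false by (symmetry; apply Nat.eqb_neq; lia). lra.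
Qed.

Lemma construction (m : nat) (hm : (2 <= m)%nat) : antipodal_open_nm_cover 1 m (m + 2) (Acon m).
Proof.
  split; [split; [split|] | split].
  - intros i p _ [H _]; auto.
  - intros p Hp. destruct p as [x y]. unfold S1 in Hp; cbn in Hp.
    destruct (Rlt_dec 0 y).
    + exists (0%nat :: nil). split; [constructor; [intros []|constructor]|split; auto].
      intros i [<-|[]]. split; [lia|]. split; auto. destruct (v_lt m 0) as [-> ->]; [lia|]. cbn; lra.
    + destruct (Rlt_dec 0 (x - y)).
      * exists (m :: nil). split; [constructor; [intros []|constructor]|split; auto].
        intros i [<-|[]]. split; [lia|]. split; auto. destruct (v_m m) as [-> ->]. cbn; lra.
      * exists ((m+1)%nat :: nil). split; [constructor; [intros []|constructor]|split; auto].
        intros i [<-|[]]. split; [lia|]. split; auto. destruct (v_m1 m) as [-> ->]. cbn.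
        destruct (Rlt_dec 0 (-1 * x + -1 * y)); auto. exfalso. nra.
  - intros p [Hp Hy]. exists (seq 0 m). split; [apply seq_NoDup|]. split; [apply length_seq|].
    intros i Hi. apply in_seq in Hi. split; [lia|]. split; auto.
    destruct (v_lt m i) as [-> ->]; [lia|]. lra.
  - intros i p _ [Hp Hv] [_ Hv']. destruct p as [x y]; unfold antipode in Hv'; cbn in Hv, Hv'. nra.
  - intros i _ p [Hp Hv]. set (L := vx m i * fst p + vy m i * snd p) in *.
    exists (L/2). split; [lra|]. intros q Hq Hd. split; auto.
    pose proof (abs_le_dist_x p q). pose proof (abs_le_dist_y p q).
    destruct (vbounds m i) as [[a1 a2] [b1 b2]].
    revert H H0. unfold Rabs; destruct Rcase_abs; destruct Rcase_abs; intros; unfold L in *; nra.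
Qed.

Theorem proposition1 (m : nat) (hm : (2 <= m)%nat) :
  (exists A : set_family, antipodal_open_nm_cover 1 m (m + 2) A) /\
  (forall (k : nat) (A : set_family), antipodal_open_nm_cover 1 m k A -> (m + 2 <= k)%nat).
Proof.
  split; [exists (Acon m); apply construction; auto|].
  intros k A [[[Hfam Hcov] Hnorth] [Hanti Hopen]].
  assert (Hnot : forall c q, (c < k)%nat -> A c (antipode q) -> ~ A c q).
  { intros c q ck Ac Aq. apply (Hanti c q ck Aq Ac). }
  assert (Hn1 : north (pt 1)) by (apply pt_north; lra).
  destruct (Hnorth _ Hn1) as [l [ND [len Hl]]].
  destruct (one_set _ _ _ (Hcov (antipode (pt 1)) (S1_antipode _ (pt_S1 1)))) as [c [ck Ac]].
  assert (cl : ~ In c l) by (intro Hin; destruct (Hl c Hin) as [_ Hq]; exact (Hnot c _ ck Ac Hq)).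
  assert (Hk1 : (length (c :: l) <= k)%nat).
  { apply count_le. constructor; auto. intros i [<-|Hi]; auto. apply (Hl i Hi). }
  simpl in Hk1. rewrite len in Hk1.
  destruct (Nat.eq_dec k (m+1)) as [Ek|]; [|lia]. subst k. exfalso.
  assert (L : forall q j, north q -> (j < m+1)%nat -> j <> c -> A c (antipode q) -> ~ A j q -> False).
  { intros q j Nq jk jc Acq nAj.
    destruct (Hnorth _ Nq) as [l' [ND' [len' Hl']]].
    assert (~ In c l') by (intro Hin; destruct (Hl' c Hin) as [_ Hq]; exact (Hnot c _ ck Acq Hq)).
    assert (~ In j l') by (intro Hin; destruct (Hl' j Hin) as [_ Hq]; auto).
    assert (Hk : (length (c :: j :: l') <= m+1)%nat).
    { apply count_le.
      - constructor; [intros [|]; auto|constructor; auto].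
      - intros i [<-|[<-|Hi]]; auto. apply (Hl' i Hi). }
    simpl in Hk. lia. }
  set (P := fun t => A c (antipode (pt t))).
  assert (HP : forall t, 0 < t -> P t).
  { apply connected_pos; [| |exact Ac].
    - intros t Ht Pt. destruct (Hopen c ck _ Pt) as [e [epos He]].
      exists (e/2). split; [lra|]. intros u Hu Hut. apply He.
      + apply S1_antipode, pt_S1.
      + rewrite dist2_antipode. pose proof (pt_dist t u).
        rewrite Rabs_minus_sym in Hut. lra.
    - intros t Ht nPt.
      destruct (one_set _ _ _ (Hcov (antipode (pt t)) (S1_antipode _ (pt_S1 t)))) as [i [ik Ai]].
      assert (ic : i <> c) by (intros ->; contradiction).
      destruct (Hopen i ik _ Ai) as [e [epos He]].
      exists (e/2). split; [lra|]. intros u Hu Hut Pu.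
      assert (Aiu : A i (antipode (pt u))).
      { apply He. apply S1_antipode, pt_S1. rewrite dist2_antipode. pose proof (pt_dist t u).
        rewrite Rabs_minus_sym in Hut. lra. }
      apply (L (pt u) i (pt_north u Hu) ik ic Pu). apply (Hnot i _ ik Aiu). }
  destruct (one_set _ _ _ (Hcov (pt 0) (pt_S1 0))) as [j [jk Aj]].
  destruct (Hopen j jk _ Aj) as [e [epos He]].
  set (t := e/4).
  assert (tpos : 0 < t) by (unfold t; lra).
  destruct (Nat.eq_dec j c) as [->|jc].
  - assert (A c (pt t)).
    { apply He. apply pt_S1. pose proof (pt_dist 0 t).
      replace (0 - t) with (- t) in H by ring. rewrite Rabs_Ropp, Rabs_right in H by lra.
      unfold t in *; lra. }
    apply (Hnot c _ ck (HP t tpos)). auto.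
  - assert (upos : 0 < / t) by (apply Rinv_0_lt_compat; auto).
    assert (Aju : A j (antipode (pt (/ t)))).
    { rewrite pt_inv by lra. apply He. apply pt_S1. pose proof (pt_dist 0 (- t)).
      replace (0 - - t) with t in H by ring. rewrite Rabs_right in H by lra.
      unfold t in *; lra. }
    apply (L (pt (/ t)) j (pt_north _ upos) jk jc (HP _ upos)).
    apply (Hnot j _ jk Aju).
Qed.
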